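(* Let $X$ be a $T_0$ space. If the Smyth power space $P_S(X)$ is first-countable, then $X$ is first-countable.
   Context: The specialization order of $X$ is $x\le y$ iff $x\in\overline{\{y\}}$; saturated sets are upper sets in this order. $\mathsf{K}(X)$ is the set of nonempty compact saturated subsets of $X$. For open $U\subseteq X$, $\Box U=\{K\in\mathsf{K}(X):K\subseteq U\}$; the Smyth power space $P_S(X)$ is $\mathsf{K}(X)$ with the topology having base $\{\Box U: U\text{ open}\}$. *)

(* Defs.v *)
From Stdlib Require Import List.
Set Implicit Arguments.
Unset Strict Implicit.

Record is_topology (X : Type) (open : (X -> Prop) -> Prop) : Prop := {
  top_full : open (fun _ => True);
  top_inter : forall U V, open U -> open V -> open (fun x => U x /\ V x);
  top_union : forall F : (X -> Prop) -> Prop,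
      (forall U, F U -> open U) -> open (fun x => exists U, F U /\ U x)
}.

Definition subset (X : Type) (A B : X -> Prop) : Prop := forall x, A x -> B x.

Definition T0 (X : Type) (open : (X -> Prop) -> Prop) : Prop :=
  forall x y, (forall U, open U -> (U x <-> U y)) -> x = y.

(* Specialization order: x <= y iff x is in the closure of {y},
   i.e. every open set containing x contains y. *)
Definition spec_le (X : Type) (open : (X -> Prop) -> Prop) (x y : X) : Prop :=
  forall U, open U -> U x -> U y.

Definition saturated (X : Type) (open : (X -> Prop) -> Prop) (A : X -> Prop) : Prop :=
  forall x y, spec_le open x y -> A x -> A y.

Definition compact (X : Type) (open : (X -> Prop) -> Prop) (K : X -> Prop) : Prop :=
  forall F : (X -> Prop) -> Prop,
    (forall U, F U -> open U) ->
    (forall x, K x -> exists U, F U /\ U x) ->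
    exists l : list (X -> Prop),
      (forall U, In U l -> F U) /\ (forall x, K x -> exists U, In U l /\ U x).

Definition nonempty (X : Type) (A : X -> Prop) : Prop := exists x, A x.

Definition KX (X : Type) (open : (X -> Prop) -> Prop) : Type :=
  { K : X -> Prop | nonempty K /\ compact open K /\ saturated open K }.

Definition Box (X : Type) (open : (X -> Prop) -> Prop) (U : X -> Prop)
  : KX open -> Prop :=
  fun K => subset (proj1_sig K) U.

(* Smyth topology on K(X): the topology generated by the base {Box U | U open}:
   W is open iff every point of W lies in some basic open Box U contained in W. *)
Definition smyth_open (X : Type) (open : (X -> Prop) -> Prop)
  (W : KX open -> Prop) : Prop :=
  forall K, W K -> exists U, open U /\ Box U K /\ subset (Box U) W.

(* First countability: every point has a countable base of open neighbourhoods
   (indexed by nat, repetitions allowed, so finite bases are included). *)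
Definition first_countable (X : Type) (open : (X -> Prop) -> Prop) : Prop :=
  forall x, exists B : nat -> (X -> Prop),
    (forall n, open (B n) /\ B n x) /\
    (forall U, open U -> U x -> exists n, subset (B n) U).
Arguments Box {X open} U K.
Arguments smyth_open {X} open W.

(* Main.v *)
Require Import Defs.
From Stdlib Require Import List ClassicalEpsilon.

Section Aux.
Variables (X : Type) (open : (X -> Prop) -> Prop).

Definition upset (x : X) : X -> Prop := fun y => spec_le open x y.

Lemma upset_prop (x : X) :
  nonempty (upset x) /\ compact open (upset x) /\ saturated open (upset x).
Proof.
  split; [exists x; intros U _ H; exact H|split].
  - intros F HF Hc. destruct (Hc x (fun U _ H => H)) as [U [FU Ux]].
    exists (U :: nil). split.
    + intros V [<-|[]]; exact FU.
    + intros y Hy. exists U. split; [left; reflexivity|]. apply Hy; [apply HF; exact FU|exact Ux].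
  - intros y z Hyz Hxy U HU Ux. apply Hyz; [exact HU|apply Hxy; assumption].
Qed.

Definition upK (x : X) : KX open := exist _ (upset x) (upset_prop x).
End Aux.

Theorem mainTheorem6 (X : Type) (open : (X -> Prop) -> Prop) :
  is_topology open -> T0 open ->
  first_countable ((smyth_open open)) ->
  first_countable open.
Proof.
  intros _ _ FC x.
  destruct (FC (@upK X open x)) as [B [HB1 HB2]].
  assert (H : forall n, exists U, open U /\ Box U (@upK X open x) /\ subset (Box U) (B n)).
  { intro n. destruct (HB1 n) as [Ho Hin]. apply Ho; exact Hin. }
  set (U := fun n => proj1_sig (constructive_indefinite_description _ (H n))).
  assert (HU : forall n, open (U n) /\ Box (U n) (@upK X open x) /\ subset (Box (U n)) (B n)).
  { intro n. unfold U. destruct (constructive_indefinite_description _ (H n)); simpl; auto. }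
  exists U. split.
  - intro n. destruct (HU n) as [Ho [Hb _]]. split; auto.
    apply Hb. simpl. intros V _ HV; exact HV.
  - intros V HV Vx.
    assert (Hs : smyth_open open (Box V)).
    { intros K HK. exists V. split; auto. split; auto. intros L HL; exact HL. }
    assert (Hk : Box V (@upK X open x)).
    { intros y Hy. apply Hy; auto. }
    destruct (HB2 _ Hs Hk) as [n Hn]. exists n.
    intros y Hy. destruct (HU n) as [Ho [_ Hsub]].
    assert (Hby : Box (U n) (@upK X open y)).
    { intros z Hz. apply Hz; auto. }
    specialize (Hn _ (Hsub _ Hby)). apply Hn. simpl. intros W _ HW; exact HW.
Qed.
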